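(* There exists $n_0$ such that for every $n\ge n_0$, the complete bipartite graph $K_{n,n}$ has no intersection representation in $\mathbb R^3$ by homothetic tetrahedra, i.e. there is no family of closed tetrahedra $\{\lambda_v P+w_v\}_{v\in V(K_{n,n})}$ (for a fixed tetrahedron $P\subset\mathbb R^3$, $\lambda_v>0$, $w_v\in\mathbb R^3$) such that for distinct vertices $u,v$ the tetrahedra of $u$ and $v$ intersect if and only if $uv$ is an edge of $K_{n,n}$. *)

(* Defs.v *)
From Stdlib Require Import Reals.
Open Scope R_scope.

Definition pt : Type := (R * R * R)%type.

Definition padd (x y : pt) : pt :=
  let '(x1, x2, x3) := x in let '(y1, y2, y3) := y in (x1 + y1, x2 + y2, x3 + y3).
Definition psub (x y : pt) : pt :=
  let '(x1, x2, x3) := x in let '(y1, y2, y3) := y in (x1 - y1, x2 - y2, x3 - y3).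
Definition pscale (c : R) (x : pt) : pt :=
  let '(x1, x2, x3) := x in (c * x1, c * x2, c * x3).

Definition det3 (a b c : pt) : R :=
  let '(a1, a2, a3) := a in let '(b1, b2, b3) := b in let '(c1, c2, c3) := c in
  a1 * (b2 * c3 - b3 * c2) - a2 * (b1 * c3 - b3 * c1) + a3 * (b1 * c2 - b2 * c1).

Record tetra : Type := Tetra {
  tv0 : pt; tv1 : pt; tv2 : pt; tv3 : pt;
  tetra_nondeg : det3 (psub tv1 tv0) (psub tv2 tv0) (psub tv3 tv0) <> 0
}.

Definition in_tetra (P : tetra) (x : pt) : Prop :=
  exists a b c d : R, 0 <= a /\ 0 <= b /\ 0 <= c /\ 0 <= d /\ a + b + c + d = 1 /\
    x = padd (padd (pscale a (tv0 P)) (pscale b (tv1 P)))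
             (padd (pscale c (tv2 P)) (pscale d (tv3 P))).

Definition in_homothet (P : tetra) (lam : R) (w : pt) (x : pt) : Prop :=
  exists y : pt, in_tetra P y /\ x = padd (pscale lam y) w.

Definition homothets_meet (P : tetra) (l1 : R) (w1 : pt) (l2 : R) (w2 : pt) : Prop :=
  exists x : pt, in_homothet P l1 w1 x /\ in_homothet P l2 w2 x.

Definition Knn_adj (n u v : nat) : Prop :=
  ((u < n)%nat /\ (n <= v < 2 * n)%nat) \/ ((v < n)%nat /\ (n <= u < 2 * n)%nat).

Definition homothet_rep_Knn (P : tetra) (n : nat) (lam : nat -> R) (w : nat -> pt) : Prop :=
  (forall v, (v < 2 * n)%nat -> 0 < lam v) /\
  (forall u v, (u < 2 * n)%nat -> (v < 2 * n)%nat -> u <> v ->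
     (homothets_meet P (lam u) (w u) (lam v) (w v) <-> Knn_adj n u v)).

(* Main.v *)
Require Import Defs.
From Stdlib Require Import Reals Lra Arith Lia List Classical.
Local Open Scope nat_scope.
Fixpoint code (K : nat) (p : nat -> bool) : nat :=
  match K with 0 => 0 | S K => (if p 0 then 1 else 0) + 2 * code K (fun c => p (S c)) end.

Lemma code_lt K : forall p, code K p < 2 ^ K.
Proof.
  induction K; intros p; simpl; [lia|].
  specialize (IHK (fun c => p (S c))). destruct (p 0); lia.
Qed.

Lemma code_inj K : forall p q, code K p = code K q -> forall c, c < K -> p c = q c.
Proof.
  induction K; intros p q H c Hc; [lia|]. simpl in H.
  assert (E : (if p 0 then 1 else 0) = (if q 0 then 1 else 0) /\
              code K (fun c => p (S c)) = code K (fun c => q (S c))).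
  { destruct (p 0), (q 0); lia. }
  destruct E as [E1 E2]. destruct c.
  - destruct (p 0), (q 0); simpl in E1; congruence.
  - apply (IHK _ _ E2 c). lia.
Qed.

Lemma pigeon : forall m M f, (forall i, i < m -> f i < M) ->
  (forall i j, i < m -> j < m -> f i = f j -> i = j) -> m <= M.
Proof.
  induction m; intros M f Hb Hi; [lia|].
  assert (HM : f m < M) by (apply Hb; lia).
  set (g := fun i => if f i <? f m then f i else f i - 1).
  assert (m <= M - 1).
  { apply (IHm (M - 1) g).
    - intros i Hlt. unfold g. assert (f i < M) by (apply Hb; lia).
      assert (f i <> f m) by (intro E; apply Hi in E; lia).
      destruct (Nat.ltb_spec (f i) (f m)); lia.
    - intros i j Hi' Hj' E. unfold g in E.
      assert (f i <> f m) by (intro E'; apply Hi in E'; lia).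
      assert (f j <> f m) by (intro E'; apply Hi in E'; lia).
      apply Hi; try lia.
      destruct (Nat.ltb_spec (f i) (f m)), (Nat.ltb_spec (f j) (f m)); lia. }
  lia.
Qed.

Lemma mono_path s m (col : nat -> nat -> nat) : (forall i j, col i j < 16) -> 2 ^ 16 < m ->
  exists i j k, s <= i /\ i < j /\ j < k /\ k < s + m /\ col i j = col j k.
Proof.
  intros Hc Hm.
  destruct (classic (exists i j k, s <= i /\ i < j /\ j < k /\ k < s + m /\ col i j = col j k))
    as [H|H]; [exact H|exfalso].
  set (inb := fun j c => existsb (fun i => Nat.eqb (col i j) c) (seq s (j - s))).
  set (f := fun t => code 16 (inb (s + t))).
  assert (Hinb : forall j c, inb j c = true <-> exists i, s <= i < j /\ col i j = c).
  { intros j c. unfold inb. rewrite existsb_exists. split.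
    - intros [i [Hin Heq]]. apply in_seq in Hin. apply Nat.eqb_eq in Heq. exists i. split; [lia|auto].
    - intros [i [Hin Heq]]. exists i. split; [apply in_seq; lia | apply Nat.eqb_eq; auto]. }
  assert (key : forall t1 t2, t1 < t2 -> t2 < m -> f t1 = f t2 -> False).
  { intros t1 t2 Hlt Ht2 E. unfold f in E.
    pose proof (code_inj 16 _ _ E (col (s + t1) (s + t2)) (Hc _ _)) as E2.
    assert (inb (s + t2) (col (s + t1) (s + t2)) = true) by (apply Hinb; exists (s + t1); split; [lia|auto]).
    rewrite <- E2 in H0. apply Hinb in H0. destruct H0 as [h [Hh1 Hh2]].
    apply H. exists h, (s + t1), (s + t2). repeat split; lia. }
  assert (m <= 2 ^ 16).
  { apply (pigeon m (2 ^ 16) f).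
    - intros i _. apply code_lt.
    - intros i j Hi Hj E. destruct (Nat.lt_total i j) as [Hlt|[Heq|Hgt]]; auto.
      + exfalso; apply (key i j); auto.
      + exfalso; apply (key j i); auto. }
  lia.
Qed.
Local Open Scope R_scope.
Definition e1 (P : tetra) := psub (tv1 P) (tv0 P).
Definition e2 (P : tetra) := psub (tv2 P) (tv0 P).
Definition e3 (P : tetra) := psub (tv3 P) (tv0 P).
Definition DD (P : tetra) := det3 (e1 P) (e2 P) (e3 P).
Definition phi1 P x := det3 x (e2 P) (e3 P) / DD P.
Definition phi2 P x := det3 (e1 P) x (e3 P) / DD P.
Definition phi3 P x := det3 (e1 P) (e2 P) x / DD P.
Definition q1 P lam w := phi1 P (padd (pscale lam (tv0 P)) w).
Definition q2 P lam w := phi2 P (padd (pscale lam (tv0 P)) w).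
Definition q3 P lam w := phi3 P (padd (pscale lam (tv0 P)) w).
Definition be0 P lam w := lam + q1 P lam w + q2 P lam w + q3 P lam w.
Definition be1 P lam w := - q1 P lam w.
Definition be2 P lam w := - q2 P lam w.
Definition be3 P lam w := - q3 P lam w.

Lemma be_sum P lam w : be0 P lam w + be1 P lam w + be2 P lam w + be3 P lam w = lam.
Proof. unfold be0, be1, be2, be3. ring. Qed.

Lemma phi_ident P lam w a b c d :
  a + b + c + d = 1 ->
  let x := padd (pscale lam (padd (padd (pscale a (tv0 P)) (pscale b (tv1 P)))
             (padd (pscale c (tv2 P)) (pscale d (tv3 P))))) w in
  phi1 P x - q1 P lam w = lam * b /\ phi2 P x - q2 P lam w = lam * c /\
  phi3 P x - q3 P lam w = lam * d.
Proof.
  intros Hs x; subst x.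
  destruct P as [p0 p1 p2 p3 HD]; simpl in *.
  destruct p0 as [[x0 y0] z0]; destruct p1 as [[x1 y1] z1];
  destruct p2 as [[x2 y2] z2]; destruct p3 as [[x3 y3] z3]; destruct w as [[w1 w2] w3].
  unfold q1, q2, q3, phi1, phi2, phi3, DD, e1, e2, e3 in *; simpl in *.
  assert (Ha : a = 1 - b - c - d) by lra. subst a.
  repeat split; field; exact HD.
Qed.

Lemma memA P lam w x : 0 < lam -> in_homothet P lam w x ->
  be1 P lam w >= - phi1 P x /\ be2 P lam w >= - phi2 P x /\ be3 P lam w >= - phi3 P x /\
  phi1 P x + phi2 P x + phi3 P x <= be0 P lam w.
Proof.
  intros Hl [y [[a [b [c [d [Ha [Hb [Hc [Hd [Hs Hy]]]]]]]]] Hx]]. subst x y.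
  destruct (phi_ident P lam w a b c d Hs) as [E1 [E2 E3]].
  unfold be0, be1, be2, be3.
  assert (0 <= lam * b) by (apply Rmult_le_pos; lra).
  assert (0 <= lam * c) by (apply Rmult_le_pos; lra).
  assert (0 <= lam * d) by (apply Rmult_le_pos; lra).
  assert (0 <= lam * a) by (apply Rmult_le_pos; lra).
  assert (lam * a + lam * b + lam * c + lam * d = lam) by (transitivity (lam * (a + b + c + d)); [ring | rewrite Hs; ring]).
  lra.
Qed.

Definition Xpt P (z1 z2 z3 : R) : pt :=
  padd (padd (pscale (- z1) (e1 P)) (pscale (- z2) (e2 P))) (pscale (- z3) (e3 P)).

Lemma memB P lam w z0 z1 z2 z3 : 0 < lam -> z0 + z1 + z2 + z3 = 0 ->
  z0 <= be0 P lam w -> z1 <= be1 P lam w -> z2 <= be2 P lam w -> z3 <= be3 P lam w ->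
  in_homothet P lam w (Xpt P z1 z2 z3).
Proof.
  intros Hl Hz H0 H1 H2 H3.
  unfold be0, be1, be2, be3 in *.
  set (Q1 := q1 P lam w) in *. set (Q2 := q2 P lam w) in *. set (Q3 := q3 P lam w) in *.
  set (b := (- z1 - Q1) / lam). set (c := (- z2 - Q2) / lam). set (d := (- z3 - Q3) / lam).
  set (a := (lam + z1 + z2 + z3 + Q1 + Q2 + Q3) / lam).
  exists (padd (padd (pscale a (tv0 P)) (pscale b (tv1 P))) (padd (pscale c (tv2 P)) (pscale d (tv3 P)))).
  assert (Hi : 0 <= / lam) by (left; apply Rinv_0_lt_compat; lra).
  split.
  - exists a, b, c, d. unfold a, b, c, d, Rdiv.
    repeat split; try (apply Rmult_le_pos; [lra | exact Hi]).
    field; lra.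
  - unfold Xpt, a, b, c, d, Q1, Q2, Q3, q1, q2, q3.
    destruct P as [p0 p1 p2 p3 HD]; simpl in *.
    destruct p0 as [[x0 y0] u0]; destruct p1 as [[x1 y1] u1];
    destruct p2 as [[x2 y2] u2]; destruct p3 as [[x3 y3] u3]; destruct w as [[w1 w2] w3].
    unfold phi1, phi2, phi3, DD, e1, e2, e3 in *; simpl in *.
    assert (lam <> 0) by lra.
    f_equal; [f_equal|]; field; auto.
Qed.

Definition sel (t : bool) (x y : R) := if t then x else y.
Definition cross (x0 x1 x2 x3 y0 y1 y2 y3 : R) : Prop :=
  forall t0 t1 t2 t3 : bool, 0 <= sel t0 x0 y0 + sel t1 x1 y1 + sel t2 x2 y2 + sel t3 x3 y3.
Definition tb (x y : R) : bool := if Rle_dec x y then true else false.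

Lemma sel_le x y : sel (tb x y) x y <= x /\ sel (tb x y) x y <= y.
Proof. unfold sel, tb. destruct (Rle_dec x y); lra. Qed.

Lemma meet_cross P l1 w1 l2 w2 : 0 < l1 -> 0 < l2 -> homothets_meet P l1 w1 l2 w2 ->
  cross (be0 P l1 w1) (be1 P l1 w1) (be2 P l1 w1) (be3 P l1 w1)
        (be0 P l2 w2) (be1 P l2 w2) (be2 P l2 w2) (be3 P l2 w2).
Proof.
  intros H1 H2 [x [Hx1 Hx2]].
  pose proof (memA P l1 w1 x H1 Hx1). pose proof (memA P l2 w2 x H2 Hx2).
  intros t0 t1 t2 t3; destruct t0, t1, t2, t3; unfold sel; lra.
Qed.

Lemma nomeet_sel P l1 w1 l2 w2 : 0 < l1 -> 0 < l2 -> ~ homothets_meet P l1 w1 l2 w2 ->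
  let x0 := be0 P l1 w1 in let x1 := be1 P l1 w1 in let x2 := be2 P l1 w1 in let x3 := be3 P l1 w1 in
  let y0 := be0 P l2 w2 in let y1 := be1 P l2 w2 in let y2 := be2 P l2 w2 in let y3 := be3 P l2 w2 in
  sel (tb x0 y0) x0 y0 + sel (tb x1 y1) x1 y1 + sel (tb x2 y2) x2 y2 + sel (tb x3 y3) x3 y3 < 0.
Proof.
  intros H1 H2 Hn x0 x1 x2 x3 y0 y1 y2 y3.
  destruct (Rlt_le_dec (sel (tb x0 y0) x0 y0 + sel (tb x1 y1) x1 y1 + sel (tb x2 y2) x2 y2 + sel (tb x3 y3) x3 y3) 0) as [h|h]; [exact h|exfalso].
  set (S := sel (tb x0 y0) x0 y0 + sel (tb x1 y1) x1 y1 + sel (tb x2 y2) x2 y2 + sel (tb x3 y3) x3 y3) in *.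
  pose proof (sel_le x0 y0). pose proof (sel_le x1 y1). pose proof (sel_le x2 y2). pose proof (sel_le x3 y3).
  apply Hn. exists (Xpt P (sel (tb x1 y1) x1 y1 - S/4) (sel (tb x2 y2) x2 y2 - S/4) (sel (tb x3 y3) x3 y3 - S/4)).
  split; apply memB with (z0 := sel (tb x0 y0) x0 y0 - S/4); try assumption;
    unfold S in *; subst x0 x1 x2 x3 y0 y1 y2 y3; lra.
Qed.

Lemma lp (a10 a11 a12 a13 a20 a21 a22 a23 a30 a31 a32 a33
          b10 b11 b12 b13 b20 b21 b22 b23 b30 b31 b32 b33 : R)
  (t0 t1 t2 t3 s0 s1 s2 s3 : bool) :
  sel t0 a10 a20 + sel t1 a11 a21 + sel t2 a12 a22 + sel t3 a13 a23 < 0 ->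
  sel t0 a20 a30 + sel t1 a21 a31 + sel t2 a22 a32 + sel t3 a23 a33 < 0 ->
  sel s0 b10 b20 + sel s1 b11 b21 + sel s2 b12 b22 + sel s3 b13 b23 < 0 ->
  sel s0 b20 b30 + sel s1 b21 b31 + sel s2 b22 b32 + sel s3 b23 b33 < 0 ->
  0 < a10 + a11 + a12 + a13 -> 0 < a20 + a21 + a22 + a23 -> 0 < a30 + a31 + a32 + a33 ->
  0 < b10 + b11 + b12 + b13 -> 0 < b20 + b21 + b22 + b23 -> 0 < b30 + b31 + b32 + b33 ->
  cross a10 a11 a12 a13 b10 b11 b12 b13 ->
  cross a10 a11 a12 a13 b20 b21 b22 b23 ->
  cross a10 a11 a12 a13 b30 b31 b32 b33 ->
  cross a20 a21 a22 a23 b10 b11 b12 b13 ->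
  cross a20 a21 a22 a23 b20 b21 b22 b23 ->
  cross a20 a21 a22 a23 b30 b31 b32 b33 ->
  cross a30 a31 a32 a33 b10 b11 b12 b13 ->
  cross a30 a31 a32 a33 b20 b21 b22 b23 ->
  cross a30 a31 a32 a33 b30 b31 b32 b33 -> False.
Proof.
  intros HA1 HA2 HB1 HB2 P1 P2 P3 Q1 Q2 Q3 C11 C12 C13 C21 C22 C23 C31 C32 C33.
  Ltac spec16 H := let f t0 t1 t2 t3 := (let h := fresh in pose proof (H t0 t1 t2 t3) as h; unfold sel in h) in
    f true true true true; f true true true false; f true true false true; f true true false false;
    f true false true true; f true false true false; f true false false true; f true false false false;
    f false true true true; f false true true false; f false true false true; f false true false false;
    f false false true true; f false false true false; f false false false true; f false false false false;
    clear H.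
  spec16 C11. spec16 C12. spec16 C13. spec16 C21. spec16 C22. spec16 C23. spec16 C31. spec16 C32. spec16 C33.
  destruct t0, t1, t2, t3, s0, s1, s2, s3; unfold sel in *; lra.
Qed.

Definition bit (b : bool) : nat := if b then 1 else 0.
Definition col4 (b0 b1 b2 b3 : bool) : nat := (bit b0 + 2 * bit b1 + 4 * bit b2 + 8 * bit b3)%nat.
Lemma col4_lt b0 b1 b2 b3 : (col4 b0 b1 b2 b3 < 16)%nat.
Proof. unfold col4, bit; destruct b0, b1, b2, b3; lia. Qed.
Lemma col4_inj b0 b1 b2 b3 c0 c1 c2 c3 : col4 b0 b1 b2 b3 = col4 c0 c1 c2 c3 ->
  b0 = c0 /\ b1 = c1 /\ b2 = c2 /\ b3 = c3.
Proof. unfold col4, bit. destruct b0, b1, b2, b3, c0, c1, c2, c3; simpl; intro H; try lia; auto. Qed.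

Theorem mainTheorem4 :
  exists n0 : nat, forall n : nat, (n0 <= n)%nat ->
    forall (P : tetra) (lam : nat -> R) (w : nat -> pt),
      ~ homothet_rep_Knn P n lam w.
Proof.
  exists (S (2 ^ 16))%nat. intros n Hn P lam w [Hpos Hrep].
  set (B0 := fun v => be0 P (lam v) (w v)). set (B1 := fun v => be1 P (lam v) (w v)).
  set (B2 := fun v => be2 P (lam v) (w v)). set (B3 := fun v => be3 P (lam v) (w v)).
  set (col := fun i j => col4 (tb (B0 i) (B0 j)) (tb (B1 i) (B1 j)) (tb (B2 i) (B2 j)) (tb (B3 i) (B3 j))).
  assert (Hcol : forall i j, (col i j < 16)%nat) by (intros; apply col4_lt).
  destruct (mono_path 0 n col Hcol ltac:(lia)) as [i [j [k [Hi [Hij [Hjk [Hk Ec]]]]]]].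
  destruct (mono_path n n col Hcol ltac:(lia)) as [i' [j' [k' [Hi' [Hij' [Hjk' [Hk' Ec']]]]]]].
  unfold col in Ec, Ec'. apply col4_inj in Ec. apply col4_inj in Ec'.
  destruct Ec as [E0 [E1 [E2 E3]]]. destruct Ec' as [F0 [F1 [F2 F3]]].
  assert (Hnm : forall u v, (u < 2 * n)%nat -> (v < 2 * n)%nat -> u <> v -> ~ Knn_adj n u v ->
    let x0 := B0 u in let x1 := B1 u in let x2 := B2 u in let x3 := B3 u in
    let y0 := B0 v in let y1 := B1 v in let y2 := B2 v in let y3 := B3 v in
    sel (tb x0 y0) x0 y0 + sel (tb x1 y1) x1 y1 + sel (tb x2 y2) x2 y2 + sel (tb x3 y3) x3 y3 < 0).
  { intros u v Hu Hv Huv Hadj. apply nomeet_sel; try (apply Hpos; lia).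
    intro Hm. apply Hadj. apply (Hrep u v Hu Hv Huv). exact Hm. }
  assert (Hcr : forall u v, (u < n)%nat -> (n <= v < 2 * n)%nat ->
    cross (B0 u) (B1 u) (B2 u) (B3 u) (B0 v) (B1 v) (B2 v) (B3 v)).
  { intros u v Hu Hv. apply meet_cross; try (apply Hpos; lia).
    apply (Hrep u v); try lia. left; lia. }
  assert (Hps : forall v, (v < 2 * n)%nat -> 0 < B0 v + B1 v + B2 v + B3 v).
  { intros v Hv. unfold B0, B1, B2, B3. rewrite be_sum. apply Hpos; lia. }
  assert (A1 := Hnm i j ltac:(lia) ltac:(lia) ltac:(lia) ltac:(unfold Knn_adj; lia)).
  assert (A2 := Hnm j k ltac:(lia) ltac:(lia) ltac:(lia) ltac:(unfold Knn_adj; lia)).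
  assert (A3 := Hnm i' j' ltac:(lia) ltac:(lia) ltac:(lia) ltac:(unfold Knn_adj; lia)).
  assert (A4 := Hnm j' k' ltac:(lia) ltac:(lia) ltac:(lia) ltac:(unfold Knn_adj; lia)).
  simpl in A1, A2, A3, A4.
  rewrite <- E0, <- E1, <- E2, <- E3 in A2. rewrite <- F0, <- F1, <- F2, <- F3 in A4.
  eapply (lp _ _ _ _ _ _ _ _ _ _ _ _ _ _ _ _ _ _ _ _ _ _ _ _ _ _ _ _ _ _ _ _ A1 A2 A3 A4);
    try (apply Hps; lia); apply Hcr; lia.
Qed.
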